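(* Let $L\subseteq Q$ be an extension of Lie algebras such that $Q$ is a weak algebra of quotients of $L$, and let $I$ be an ideal of $L$ with $\mathrm{Ann}_L(I)=0$. Then $\mathrm{r.ann}_{A(Q)}(A_Q(I))=0$.
   Context: Lie algebras over a commutative unital ring $\Phi$. $\mathrm{ad}_x(y)=[x,y]$; $A(Q)$ is the associative subalgebra of $\mathrm{End}_\Phi(Q)$ generated by all $\mathrm{ad}_x$, $x\in Q$; for $I\subseteq L\subseteq Q$, $A_Q(I)$ is the subalgebra of $A(Q)$ generated by $\{\mathrm{ad}_x:x\in I\}$. $\mathrm{Ann}_L(X)=\{a\in L:[a,X]=0\}$. For an associative algebra $B$ and $X\subseteq B$, $\mathrm{r.ann}_B(X)=\{b\in B:Xb=0\}$. $Q$ is a weak algebra of quotients of $L$ if for every nonzero $q\in Q$ there is $x\in L$ with $0\ne[x,q]\in L$. *)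

(* Defs.v *)
From HB Require Import structures.
From mathcomp Require Import all_boot all_order all_algebra.
Set Implicit Arguments. Unset Strict Implicit. Unset Printing Implicit Defensive.
Import GRing.Theory.
Local Open Scope ring_scope.

Definition is_lie_bracket (R : comPzRingType) (Q : lmodType R)
    (br : Q -> Q -> Q) : Prop :=
  [/\ (forall (a : R) x y z, br (a *: x + y) z = a *: br x z + br y z),
      (forall (a : R) x y z, br x (a *: y + z) = a *: br x y + br x z),
      (forall x, br x x = 0) &
      (forall x y z, br x (br y z) + br y (br z x) + br z (br x y) = 0)].

Definition is_submodule (R : comPzRingType) (Q : lmodType R) (S : Q -> Prop) :=
  [/\ S 0, (forall x y, S x -> S y -> S (x + y)) &
      (forall (a : R) x, S x -> S (a *: x))].

Definition is_lie_subalgebra (R : comPzRingType) (Q : lmodType R)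
    (br : Q -> Q -> Q) (L : Q -> Prop) :=
  is_submodule L /\ (forall x y, L x -> L y -> L (br x y)).

Definition is_lie_ideal (R : comPzRingType) (Q : lmodType R)
    (br : Q -> Q -> Q) (L I : Q -> Prop) :=
  [/\ (forall x, I x -> L x), is_submodule I &
      (forall x y, L x -> I y -> I (br x y))].

Definition ann_zero (R : comPzRingType) (Q : lmodType R)
    (br : Q -> Q -> Q) (L I : Q -> Prop) :=
  forall a, L a -> (forall y, I y -> br a y = 0) -> a = 0.

Definition weak_quotients (R : comPzRingType) (Q : lmodType R)
    (br : Q -> Q -> Q) (L : Q -> Prop) :=
  forall q : Q, q <> 0 -> exists x, [/\ L x, br x q <> 0 & L (br x q)].

Definition ad (R : comPzRingType) (Q : lmodType R) (br : Q -> Q -> Q) (x : Q)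
  : Q -> Q := br x.

(* The (non-unital) associative R-subalgebra of End_R(Q) generated by the
   ad_x, x in S; endomorphisms are represented as functions Q -> Q. *)
Inductive gen_ad_alg (R : comPzRingType) (Q : lmodType R)
    (br : Q -> Q -> Q) (S : Q -> Prop) : (Q -> Q) -> Prop :=
| gaa_ad x : S x -> gen_ad_alg br S (ad br x)
| gaa_zero : gen_ad_alg br S (fun _ => 0)
| gaa_add f g : gen_ad_alg br S f -> gen_ad_alg br S g ->
    gen_ad_alg br S (fun v => f v + g v)
| gaa_scale (c : R) f : gen_ad_alg br S f -> gen_ad_alg br S (fun v => c *: f v)
| gaa_comp f g : gen_ad_alg br S f -> gen_ad_alg br S g ->
    gen_ad_alg br S (fun v => f (g v)).

Definition A_alg (R : comPzRingType) (Q : lmodType R) (br : Q -> Q -> Q) :=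
  gen_ad_alg br (fun _ => True).
Definition A_alg_of (R : comPzRingType) (Q : lmodType R) (br : Q -> Q -> Q)
    (I : Q -> Prop) := gen_ad_alg br I.

Definition rann (R : comPzRingType) (Q : lmodType R) (br : Q -> Q -> Q)
    (I : Q -> Prop) (b : Q -> Q) : Prop :=
  A_alg br b /\ forall a, A_alg_of br I a -> forall v, a (b v) = 0.

(* Main.v *)
Require Import Defs.
From mathcomp Require Import all_boot all_order all_algebra.
From Stdlib Require Import Classical.
Import GRing.Theory.
Local Open Scope ring_scope.

Theorem mainTheorem8 (R : comPzRingType) (Q : lmodType R) (br : Q -> Q -> Q)
    (L I : Q -> Prop) :
  is_lie_bracket br ->
  is_lie_subalgebra br L ->
  weak_quotients br L ->
  is_lie_ideal br L I ->
  ann_zero br L I ->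
  forall b : Q -> Q, rann br I b -> forall v, b v = 0.
Proof.
move=> [linl linr alt jac] _ wq [IL [_ _ Ism] Iid] ann b [_ hb] v.
have addl x y z : br (x + y) z = br x z + br y z.
  by have := linl 1 x y z; rewrite !scale1r.
have addr x y z : br x (y + z) = br x y + br x z.
  by have := linr 1 x y z; rewrite !scale1r.
have br0 x : br x 0 = 0.
  have h := addr x 0 0; rewrite addr0 in h.
  by apply: (@addrI _ (br x 0)); rewrite addr0 -h.
have anti x y : br y x = - br x y.
  have h := alt (x + y); rewrite addl !addr alt add0r alt addr0 in h.
  by apply/eqP; rewrite -addr_eq0 addrC h.
have hq y : I y -> br y (b v) = 0.
  by move=> Iy; apply: (hb (ad br y)); constructor.
apply: NNPP => nq.
have [x [Lx nz Lxq]] := wq _ nq.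
apply: nz; apply: ann => // y Iy.
have hj := jac y x (b v).
have e1 : br x (br (b v) y) = 0 by rewrite (anti y (b v)) hq // oppr0 br0.
rewrite e1 in hj.
have Iyx : I (br y x).
  by rewrite anti -scaleN1r; apply: Ism; apply: Iid.
have e2 : br (b v) (br y x) = 0 by rewrite (anti (br y x) (b v)) hq // oppr0.
rewrite e2 in hj.
rewrite !addr0 in hj. rewrite (anti y (br x (b v))). by rewrite hj oppr0.
Qed.
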